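(* Let $(I,\preceq)$ be a finite poset with $|I|=n$, for each $i\in I$ let $X_i$ be a finite set with $|X_i|\ge 2$, let $\{p_i^0\}_{i\in I}$ be a strict probability measure on $I$, and let $\mathcal{P}$ be the generalized crested product defined by $(I,\preceq)$ and $\{p_i^0\}$ in which every factor chain is the uniform chain $U_i$ on $X_i$. Let $R\subseteq I$ and let $\widetilde{\mathcal{P}}$ be the lumped chain of $\mathcal{P}$ with respect to the partition of $X=\prod_{i\in I}X_i$ into classes of the relation $x\sim y\iff x_i=y_i$ for all $i\in I\setminus R$ (this chain is lumpable with respect to that partition); identify each class with the common value $(x_i)_{i\in I\setminus R}\in\prod_{i\in I\setminus R}X_i$. Then $$\widetilde{\mathcal{P}}=\sum_{i\in I}p_i^0\left(\bigotimes_{j\in H[i]\setminus R}U_j\right)\otimes\left(\bigotimes_{j\notin (H[i]\cup R)}I_j\right),$$ i.e. for $u,v\in\prod_{j\in I\setminus R}X_j$, $\widetilde{p}(u,v)=\sum_{i\in I}p_i^0\prod_{j\in H[i]\setminus R}\frac{1}{|X_j|}\prod_{j\in I\setminus (H[i]\cup R)}\delta(u_j,v_j)$.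
   Context: $H(i)=\{j\in I: j\prec i\}$, $H[i]=H(i)\sqcup\{i\}$. $U_j$ is the uniform Markov operator on $X_j$ (all matrix entries $1/|X_j|$), $I_j$ the identity operator on $X_j$, and $\delta$ the Kronecker delta. The generalized crested product with uniform factors is the Markov chain on $X$ with transition probabilities $p(x,y)=\sum_{i\in I}p_i^0\prod_{j\in H[i]}\frac{1}{|X_j|}\prod_{j\notin H[i]}\delta(x_j,y_j)$, i.e. operator $\sum_{i}p_i^0(\bigotimes_{j\in H[i]}U_j)\otimes(\bigotimes_{j\notin H[i]}I_j)$. If a chain $p$ is lumpable w.r.t. a partition $\mathcal{L}$ (i.e. $x\mapsto\sum_{y\in L'}p(x,y)$ is constant on each part $L$ for every part $L'$), the lumped chain on $\mathcal{L}$ has transition probabilities $\widetilde p(L,L')=\sum_{y\in L'}p(x,y)$ for any $x\in L$. *)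

(* Defs.v *)
From HB Require Import structures.
From mathcomp Require Import all_boot all_order all_algebra.
Set Implicit Arguments. Unset Strict Implicit. Unset Printing Implicit Defensive.
Import Order.TTheory GRing.Theory Num.Theory.
Local Open Scope ring_scope.

Definition config (I : finType) (X : I -> finType) :=
  {dffun forall i : I, X i}.

Definition strict_prob (R : numDomainType) (I : finType) (p0 : I -> R) :=
  (forall i, 0 < p0 i) /\ \sum_(i : I) p0 i = 1.

(* Generalized crested product with uniform factors:
   p(x,y) = sum_i p0_i prod_{j in H[i]} 1/|X_j| prod_{j notin H[i]} delta(x_j,y_j),
   where H[i] = {j | j <= i}. *)
Definition crested_uniform (R : fieldType) (d : Order.disp_t) (I : finPOrderType d)
  (X : I -> finType) (p0 : I -> R) (x y : config X) : R :=
  \sum_(i : I) p0 i *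
     (\prod_(j : I | (j <= i)%O) (#|X j|%:R)^-1) *
     (\prod_(j : I | ~~ (j <= i)%O) (x j == y j)%:R).

Definition subI (I : finType) (S : {set I}) := {k : I | k \notin S}.

Definition restr_config (I : finType) (X : I -> finType) (S : {set I})
  (x : config X) : {dffun forall j : subI S, X (sval j)} :=
  @finfun (subI S) (fun j => X (sval j)) (fun j => x (sval j)).

(* Lumpability of a chain p on T with respect to the partition into fibers of f
   (classes identified with values of f). *)
Definition lumpable (R : nmodType) (T : finType) (U : eqType)
  (p : T -> T -> R) (f : T -> U) :=
  forall x x' (v : U), f x = f x' ->
    \sum_(y : T | f y == v) p x y = \sum_(y : T | f y == v) p x' y.

(* Main.v *)
Require Import Defs.
From HB Require Import structures.
From mathcomp Require Import all_boot all_order all_algebra.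
Import Order.TTheory GRing.Theory Num.Theory.
Local Open Scope ring_scope.
Set Implicit Arguments. Unset Strict Implicit. Unset Printing Implicit Defensive.

Section V.
Variables (I : finType) (X : I -> finType) (S : {set I}).
Variables (x : config X) (v : {dffun forall j : subI S, X (sval j)}).

Definition vext (j : I) : X j :=
  match (j \in S) as b return ((j \in S) = b -> X j) with
  | true => fun _ => x j
  | false => fun h => v (exist _ j (negbT h))
  end erefl.

Lemma vext_gen j (P : X j -> Prop) :
  (j \in S -> P (x j)) -> (forall h : j \notin S, P (v (exist _ j h))) -> P (vext j).
Proof.
move=> H1 H2; rewrite /vext.
have gen : forall b (e : (j \in S) = b), P (match b as b0 return ((j \in S) = b0 -> X j) with
  | true => fun _ => x j | false => fun h => v (exist _ j (negbT h)) end e).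
  by case=> e; [exact: (H1 e) | exact: (H2 (negbT e))].
exact: gen.
Qed.

Lemma vextE (k : subI S) : vext (sval k) = v k.
Proof.
case: k => j hj /=; apply: (@vext_gen j (fun a => a = v (exist _ j hj))) => [h|h]; first by exfalso; move/negP: hj; apply.
by rewrite (bool_irrelevance h hj).
Qed.

Lemma vextR j : j \in S -> vext j = x j.
Proof. move=> hj; apply: (@vext_gen j (fun a => a = x j)) => // h; exfalso; move/negP: h; apply; exact: hj. Qed.
End V.

Lemma prod_subI (F : comNzRingType) (I : finType) (S : {set I}) (P : pred I) (g : I -> F) :
  \prod_(k : subI S | P (sval k)) g (sval k) = \prod_(j | (j \notin S) && P j) g j.
Proof.
rewrite (reindex_omap (sval : subI S -> I) insub); last first.
  by move=> i /andP[iA Pi]; rewrite insubT.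
by apply: eq_bigl=> -[i iA]/=; rewrite insubT ?iA /= eqxx andbT.
Qed.

Section Main.
Variables (F : realFieldType) (d : Order.disp_t) (I : finPOrderType d).
Variables (X : I -> finType) (R : {set I}).
Variables (x : config X) (v : {dffun forall j : subI R, X (sval j)}) (i : I).

Definition Fam (j : I) : pred (X j) :=
  [pred a | ((j \in R) || (a == vext x v j)) && ((j <= i)%O || (a == x j))].
Arguments Fam : clear implicits.

Lemma sum_count :
  \sum_(y : config X | restr_config R y == v) \prod_(j : I | ~~ (j <= i)%O) ((x j == y j)%:R : F)
  = \sum_(y in (family Fam : simpl_pred (config X))) 1.
Proof.
rewrite big_mkcond [RHS]big_mkcond; apply: eq_bigr => y _.
case: (boolP (y \in family Fam)) => [/familyP Hy | Hy].
  have -> : restr_config R y == v.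
    apply/eqP/ffunP => k; rewrite ffunE -(vextE x v).
    have := Hy (sval k); rewrite inE => /andP[/orP[hk|/eqP //] _].
    by case: k hk => j /= hj hk; rewrite hk in hj.
  rewrite big1 // => j hj; have := Hy j; rewrite inE => /andP[_].
  by rewrite (negbTE hj) /= eq_sym => ->.
have [j Hj] : exists j, ~~ Fam j (y j).
  apply/existsP; rewrite -negb_forall; apply/negP => /forallP H.
  by move/negP: Hy; apply; apply/familyP => j; apply: H.
case: ifP => // /eqP hr.
move: Hj; rewrite /Fam inE negb_and => /orP[|].
  rewrite negb_or => /andP[hR /negP []].
  by have /= -> := vextE x v (exist _ j hR); rewrite -hr ffunE.
rewrite negb_or => /andP[hi hx].
by rewrite (bigD1 j) //= eq_sym (negbTE hx) mul0r.
Qed.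

Lemma card_Fam j : #|Fam j| =
  if (j \in R) && (j <= i)%O then #|X j|
  else if (j \notin R) && ~~ (j <= i)%O then nat_of_bool (vext x v j == x j) else 1%N.
Proof.
case hR: (j \in R); case hi: (j <= i)%O => /=.
- by apply: eq_card => a; rewrite inE hR hi.
- by rewrite -(card1 (x j)); apply: eq_card => a; rewrite inE hR hi.
- by rewrite -(card1 (vext x v j)); apply: eq_card => a; rewrite inE hR hi andbT.
- case: eqP => [E|ne].
    by rewrite /= -(card1 (x j)); apply: eq_card => a; rewrite !inE hR hi /= E andbb.
  rewrite /= -(card0 (X j)); apply: eq_card => a; rewrite inE hR hi /=; apply/negP => /andP[/eqP -> /eqP]; exact: ne.
Qed.

Lemma sum_prod :
  \sum_(y : config X | restr_config R y == v) \prod_(j : I | ~~ (j <= i)%O) ((x j == y j)%:R : F)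
  = \prod_(j : I) (#|Fam j|%:R).
Proof.
rewrite sum_count sumr_const card_family foldrE.
by rewrite big_image natr_prod.
Qed.

Lemma sum_prod2 :
  \sum_(y : config X | restr_config R y == v) \prod_(j : I | ~~ (j <= i)%O) ((x j == y j)%:R : F)
  = \prod_(j : I) ((if (j \in R) && (j <= i)%O then #|X j|
  else if (j \notin R) && ~~ (j <= i)%O then nat_of_bool (vext x v j == x j) else 1%N)%:R).
Proof. by rewrite sum_prod; apply: eq_bigr => j _; congr (_%:R); exact: card_Fam. Qed.

End Main.

Lemma part2 (F : realFieldType) (d : Order.disp_t) (I : finPOrderType d)
  (X : I -> finType) (hX : forall i, (1 < #|X i|)%N)
  (p0 : I -> F) (R : {set I})
  (v : {dffun forall j : subI R, X (sval j)}) (x : config X) :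
    \sum_(y : config X | restr_config R y == v) crested_uniform p0 x y =
    \sum_(i : I) p0 i *
      (\prod_(j : subI R | (sval j <= i)%O) (#|X (sval j)|%:R)^-1) *
      (\prod_(j : subI R | ~~ (sval j <= i)%O) (restr_config R x j == v j)%:R).
Proof.
rewrite /crested_uniform exchange_big /=; apply: eq_big => // i _.
rewrite -mulr_sumr sum_prod2 -!mulrA; congr (_ * _).
under [X in _ = _ * X]eq_bigr => k _ do rewrite ffunE -(vextE x v k).
rewrite (prod_subI R (fun j => (j <= i)%O) (fun j => (#|X j|%:R : F)^-1)).
rewrite (prod_subI R (fun j => ~~ (j <= i)%O) (fun j => ((x j == vext x v j)%:R : F))).
rewrite big_mkcond [in RHS]big_mkcond [X in _ = _ * X]big_mkcond /= -!big_split /=.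
apply: eq_big => // j _.
case hR: (j \in R); case hi: (j <= i)%O => /=; rewrite ?mul1r ?mulr1 //.
  rewrite mulVf // pnatr_eq0 -lt0n; apply: leq_trans (hX j); done.
by rewrite eq_sym.
Qed.

Unset Implicit Arguments. Set Strict Implicit. Set Printing Implicit Defensive.

Theorem proposition4 (F : realFieldType) (d : Order.disp_t) (I : finPOrderType d)
  (X : I -> finType) (hX : forall i, (1 < #|X i|)%N)
  (p0 : I -> F) (hp0 : strict_prob p0) (R : {set I}) :
  lumpable (crested_uniform p0) (@restr_config I X R) /\
  forall (u v : {dffun forall j : subI R, X (sval j)}) (x : config X),
    restr_config R x = u ->
    \sum_(y : config X | restr_config R y == v) crested_uniform p0 x y =
    \sum_(i : I) p0 i *
      (\prod_(j : subI R | (sval j <= i)%O) (#|X (sval j)|%:R)^-1) *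
      (\prod_(j : subI R | ~~ (sval j <= i)%O) (u j == v j)%:R).
Proof.
split.
  move=> x x' w h.
  by rewrite (part2 hX p0 w x) (part2 hX p0 w x') h.
by move=> u v x <-; exact: part2.
Qed.
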